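(* Let $G$ be a dicyclic group of order $2n\ge 6$. Then there exists a $G$-regular $1$-factorization of $K_{2n}$ together with a complete set of rainbow spanning trees.
   Context: A dicyclic group of order $4s$, $s\ge2$, is $\langle a,b: a^{2s}=1,\ b^2=a^s,\ b^{-1}ab=a^{-1}\rangle$. Vertices of $K_{2n}$ are identified with elements of $G$, with $G$ acting by right multiplication on vertices and edges. A $1$-factorization of $K_{2n}$ is $G$-regular if $G$ (acting sharply transitively on vertices) maps each of its $1$-factors to a $1$-factor of it. A rainbow spanning tree is a spanning tree with exactly one edge in each $1$-factor; a complete set of rainbow spanning trees is a set of such trees partitioning the edge set of $K_{2n}$. *)

(* Defs.v *)
From mathcomp Require Import all_boot all_fingroup.
Set Implicit Arguments. Unset Strict Implicit. Unset Printing Implicit Defensive.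
Local Open Scope group_scope.

Section Graphs.
Variable gT : finGroupType.

Definition Kedges : {set {set gT}} := [set e : {set gT} | #|e| == 2].

Definition adj (E : {set {set gT}}) : rel gT :=
  fun x y => (x != y) && ([set x; y] \in E).

Definition one_factor (M : {set {set gT}}) : Prop :=
  M \subset Kedges /\ forall x : gT, #|[set e in M | x \in e]| = 1%N.

Definition one_factorization (F : {set {set {set gT}}}) : Prop :=
  partition F Kedges /\ forall M, M \in F -> one_factor M.

Definition rtrans (M : {set {set gT}}) (g : gT) : {set {set gT}} :=
  [set e :* g | e in M].

(* G-regular: G acts sharply transitively on vertices (right multiplication)
   and maps each 1-factor to a 1-factor of the factorization. *)
Definition G_regular (F : {set {set {set gT}}}) : Prop :=
  forall M g, M \in F -> rtrans M g \in F.

Definition connected (T : {set {set gT}}) : Prop :=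
  forall x y : gT, connect (adj T) x y.

Definition acyclic (T : {set {set gT}}) : Prop :=
  forall c : seq gT, (3 <= size c)%N -> ~ ucycle (adj T) c.

Definition spanning_tree (T : {set {set gT}}) : Prop :=
  T \subset Kedges /\ connected T /\ acyclic T.

Definition rainbow_spanning_tree (F : {set {set {set gT}}}) (T : {set {set gT}}) : Prop :=
  spanning_tree T /\ forall M, M \in F -> #|T :&: M| = 1%N.

Definition complete_rainbow_set (F : {set {set {set gT}}}) (S : {set {set {set gT}}}) : Prop :=
  partition S Kedges /\ forall T, T \in S -> rainbow_spanning_tree F T.

End Graphs.

Definition dicyclic (gT : finGroupType) (s : nat) : Prop :=
  #|gT| = (4 * s)%N /\
  exists a b : gT, <<[set a; b]>> = [set: gT] /\
    a ^+ (2 * s)%N = 1 /\ b ^+ 2 = a ^+ s /\ b^-1 * a * b = a^-1.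

(* Main.v *)
Require Import Defs.
From mathcomp Require Import all_boot all_fingroup zify.
Set Implicit Arguments. Unset Strict Implicit. Unset Printing Implicit Defensive.

Section Arith.
Variable s : nat.
Local Notation m := (2 * s)%N.

Definition addm i j := if i + j < m then i + j else i + j - m.
Definition subm i j := if j <= i then i - j else if j <= i + m then i + m - j else 0.

Lemma addm_spec i j : (i + j < m /\ addm i j = i + j) \/ (m <= i + j /\ addm i j + m = i + j).
Proof. rewrite /addm; case: ifP => H; [left|right]; split => //; lia. Qed.
Lemma subm_spec i j : [\/ j <= i /\ subm i j + j = i, i < j <= i + m /\ subm i j + j = i + m
   | i + m < j /\ subm i j = 0].
Proof. rewrite /subm; case: ifP => H; [apply: Or31|case: ifP => H'; [apply: Or32|apply: Or33]]; split => //; lia. Qed.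

(* false = A, true = B *)
End Arith.

Ltac fin := simpl; first [ done | (congr pair; lia) | lia | (exfalso; lia) ].
Ltac noif t := match t with context [if _ then _ else _] => fail 1 | _ => idtac end.
Ltac gen1 := match goal with
 | |- context [addm ?S ?X ?Y] => noif X; noif Y; let r := fresh "r" in
     case: (addm_spec S X Y) => [[? ?]|[? ?]]; set (r := addm S X Y) in *; clearbody r
 | H : context [addm ?S ?X ?Y] |- _ => noif X; noif Y; let r := fresh "r" in
     case: (addm_spec S X Y) => [[? ?]|[? ?]]; set (r := addm S X Y) in *; clearbody r
 | |- context [subm ?S ?X ?Y] => noif X; noif Y; let r := fresh "r" in
     case: (subm_spec S X Y) => [[? ?]|[? ?]|[? ?]]; set (r := subm S X Y) in *; clearbody r
 | H : context [subm ?S ?X ?Y] |- _ => noif X; noif Y; let r := fresh "r" in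
     case: (subm_spec S X Y) => [[? ?]|[? ?]|[? ?]]; set (r := subm S X Y) in *; clearbody r
 end; try (exfalso; lia).
Ltac caseif := match goal with |- context [if ?c then _ else _] => noif c;
  let E := fresh "E" in case E: c end.
Ltac step := first [ gen1 | caseif ].
Ltac crunch := repeat (simpl; intros; step); intros; fin.


Ltac fin2 := intros; try match goal with H : (_, _) = (_, _) |- _ => case: H => * end;
  first [ done | (congr pair; lia) | lia | (exfalso; lia) ].
Ltac crunch2 := repeat (simpl; step); fin2.


Section Arith1.
Variable s : nat.
Local Notation m := (2 * s)%N.
Local Notation addm := (addm s).
Local Notation subm := (subm s).

Definition pcf (l c : bool * nat) : bool * nat :=
  let (lb, j) := l in let (e, i) := c in
  if lb then
    (if j == 0 then (e, addm i s) else if e then (false, subm i j) else (true, addm i j))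
  else if e then
    (let w := subm (addm j s) i in
     if (w == i) || (w == addm i s) then (false, subm j i) else (true, w))
  else
    (let w := subm j i in
     if (w == i) || (w == addm i s) then (true, w) else (false, w)).

Definition validl (l : bool * nat) := (l.2 < m) && ((l.1 : bool) ==> (l.2 != s)).

Lemma pcf_lt (lb : bool) j (e : bool) i : 2 <= s -> j < m -> i < m -> (pcf (lb, j) (e, i)).2 < m.
Proof. move=> s2 jm im. (case: lb; case: e; crunch). Qed.

Lemma pcf_inv (lb : bool) j (e : bool) i : 2 <= s -> j < m -> i < m -> (lb -> j != s) ->
  pcf (lb, j) (pcf (lb, j) (e, i)) = (e, i).
Proof. move=> s2 jm im. (case: lb; case: e => H; try move: (H isT) => {}H; crunch). Qed.

Lemma pcf_neq (lb : bool) j (e : bool) i : 2 <= s -> j < m -> i < m -> (lb -> j != s) ->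
  pcf (lb, j) (e, i) = (e, i) -> False.
Proof. move=> s2 jm im. (case: lb; case: e => H; try move: (H isT) => {}H; crunch2). Qed.

Definition wit (c c' : bool * nat) : bool * nat :=
  let (e, i) := c in let (f, k) := c' in
  if e == f then
    (if k == addm i s then (true, 0) else if e then (false, subm (addm i k) s) else (false, addm i k))
  else
    (let d := if e then subm i k else subm k i in
     if (d == 0) || (d == s) then (false, addm i k) else (true, d)).

Lemma wit_valid (e : bool) i (f : bool) k : 2 <= s -> i < m -> k < m ->
  validl (wit (e, i) (f, k)).
Proof. rewrite /validl => s2 im km. (apply/andP; split; case: e; case: f; crunch). Qed.

Lemma wit_ok (e : bool) i (f : bool) k : 2 <= s -> i < m -> k < m -> (e, i) <> (f, k) ->
  pcf (wit (e, i) (f, k)) (e, i) = (f, k).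
Proof.
move=> s2 im km; case: e; case: f => H;
  try (have {}H : i != k by apply/eqP => E; apply: H; rewrite E).
all: crunch2.
Qed.

Lemma wit_uniq (lb : bool) j (e : bool) i : 2 <= s -> j < m -> i < m -> (lb -> j != s) ->
  wit (e, i) (pcf (lb, j) (e, i)) = (lb, j).
Proof. move=> s2 jm im. (case: lb; case: e => H; try move: (H isT) => {}H; crunch). Qed.

End Arith1.

Section Arith2.
Variable s : nat.
Local Notation m := (2 * s)%N.
Local Notation addm := (addm s).
Local Notation subm := (subm s).
Local Notation pcf := (pcf s).
Local Notation validl := (validl s).
Definition sa (c : bool * nat) : bool * nat := (c.1, addm c.2 1).
Definition sb (c : bool * nat) : bool * nat :=
  if c.1 then (false, subm s c.2) else (true, subm 0 c.2).
Definition ta (l : bool * nat) : bool * nat := if l.1 then l else (false, addm l.2 2).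
Definition tb (l : bool * nat) : bool * nat :=
  if l.1 then (true, if l.2 == 0 then 0 else addm l.2 s) else (false, subm s l.2).

Lemma ta_ok (lb : bool) j (e : bool) i : 2 <= s -> j < m -> i < m -> (lb -> j != s) ->
  pcf (ta (lb, j)) (sa (e, i)) = sa (pcf (lb, j) (e, i)).
Proof. move=> s2 jm im. case: lb; case: e => H; try move: (H isT) => {}H; rewrite /sa /ta.
all: crunch. Qed.




Lemma tb_ok (lb : bool) j (e : bool) i : 2 <= s -> j < m -> i < m -> (lb -> j != s) ->
  pcf (tb (lb, j)) (sb (e, i)) = sb (pcf (lb, j) (e, i)).
Proof. move=> s2 jm im. case: lb; case: e => H; try move: (H isT) => {}H; rewrite /sb /tb.
all: crunch. Qed.

Lemma ta_valid (lb : bool) j : 2 <= s -> j < m -> (lb -> j != s) -> validl (ta (lb, j)).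
Proof. rewrite /validl => s2 jm. (case: lb => H; try move: (H isT) => {}H; apply/andP; split; rewrite /ta; crunch). Qed.

Lemma tb_valid (lb : bool) j : 2 <= s -> j < m -> (lb -> j != s) -> validl (tb (lb, j)).
Proof. rewrite /validl => s2 jm. (case: lb => H; try move: (H isT) => {}H; apply/andP; split; rewrite /tb; crunch). Qed.

Lemma sa_lt c : 2 <= s -> c.2 < m -> (sa c).2 < m.
Proof. case: c => e i /= s2 im. crunch. Qed.
Lemma sb_lt c : 2 <= s -> c.2 < m -> (sb c).2 < m.
Proof. case: c => e i /= s2 im. rewrite /sb. case: e; crunch. Qed.
End Arith2.

Section Arith3.
Variable s : nat.
Local Notation m := (2 * s)%N.
Local Notation addm := (addm s).
Local Notation subm := (subm s).
Local Notation pcf := (pcf s).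
Local Notation validl := (validl s).

Definition pt (eps : bool) (c : bool * nat) : bool * nat :=
  let (e, i) := c in
  if eps && ~~ e && (i == s) then (true, s.+1) else
  if eps && e && (i == s.+1) then (true, 1) else
  if ~~ e then (if (1 <= i) && (i <= s) then (false, 0) else if i == m - 1 then (true, s) else (true, 0))
  else (if (i == 0) || (i == s) || (s + 2 <= i) then (false, 0) else if i == s.+1 then (false, s) else (true, 0)).

Definition dt (eps : bool) (c : bool * nat) : nat :=
  let (e, i) := c in
  if eps && ~~ e && (i == s) then 4 else
  if eps && e && (i == s.+1) then 3 else
  if ~~ e then (if i == 0 then 0 else if i <= s then 1 else 2)
  else (if (i == 0) || (i == s) || (s + 2 <= i) then 1 else 2).

Lemma pt_lt (eps e : bool) i : 2 <= s -> i < m -> (pt eps (e, i)).2 < m.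
Proof. move=> s2 im; case: eps; case: e; crunch. Qed.

Lemma dt_dec (eps e : bool) i : 2 <= s -> i < m -> (e, i) <> (false, 0) ->
  dt eps (pt eps (e, i)) < dt eps (e, i).
Proof.
move=> s2 im; case: eps; case: e => H //=; try (have {}H : i != 0 by apply/eqP => E; apply: H; rewrite E).
all: crunch.
Qed.

Definition wl (eps : bool) (l : bool * nat) : bool * nat :=
  let (lb, j) := l in
  if lb then
    (if j == 0 then (if eps then (true, s.+1) else (false, s))
     else if j == 1 then (if eps then (false, s) else (true, s.+1))
     else if j < s then (false, m - j)
     else if j == s.+1 then (false, m - 1)
     else (true, j))
  else (if j == 0 then (true, 0) else if j < s then (false, j) else if j == s then (true, s) else (true, j - s)).

Lemma wl_lt (eps lb : bool) j : 2 <= s -> j < m -> (wl eps (lb, j)).2 < m.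
Proof. move=> s2 jm; case: eps; case: lb; crunch. Qed.

Lemma wl_root (eps lb : bool) j : 2 <= s -> j < m -> wl eps (lb, j) = (false, 0) -> False.
Proof. move=> s2 jm; case: eps; case: lb; crunch2. Qed.

Lemma wl_ok (eps lb : bool) j : 2 <= s -> j < m -> (lb -> j != s) ->
  pcf (lb, j) (wl eps (lb, j)) = pt eps (wl eps (lb, j)).
Proof.
move=> s2 jm; case: lb => H; try move: (H isT) => {}H; case: eps.
all: crunch.
Qed.
End Arith3.

Section Arith4.
Variable s : nat.
Local Notation m := (2 * s)%N.
Local Notation addm := (addm s).
Local Notation subm := (subm s).
Local Notation pt := (pt s).

Definition sh (c : bool * nat) (kk : nat) : bool * nat := (c.1, addm c.2 kk).

Definition cwA i k : nat * (bool * nat) :=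
  let d := subm k i in
  if d == 0 then (i, (true, 0)) else if d == s then (i, (true, s)) else if s + 2 <= d then (i, (true, d))
  else if d == 1 then (let kk := subm i s in (kk, if kk < s then (true, s.+1) else (false, s)))
  else if d < s then (k, (false, m - d))
  else (addm i 1, (false, m - 1)).

Definition cwS (e : bool) i k : nat * (bool * nat) :=
  let d := subm k i in
  if d == s then (if e then ((if i == 0 then m - 1 else if i <= s then i - 1 + s else i - 1), (true, s.+1))
                  else ((if i < s then i else i - s), (false, s)))
  else if d < s then (i, (e, d)) else (k, (e, subm i k)).

Definition Pc (kk : nat) (w u v : bool * nat) :=
  [&& kk < m, w.2 < m, w != (false, 0) &
     ((sh w kk == u) && (sh (pt (s <= kk) w) kk == v)) ||
     ((sh w kk == v) && (sh (pt (s <= kk) w) kk == u))].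

Ltac finb := rewrite /= ?xpair_eqE /=; lia.
Ltac crunchb := repeat (simpl; intros; step); intros; finb.

Lemma cover_AB i k : 2 <= s -> i < m -> k < m -> Pc (cwA i k).1 (cwA i k).2 (false, i) (true, k).
Proof. move=> s2 im km; rewrite /Pc /sh /cwA. crunchb. Qed.

Lemma cover_S (e : bool) i k : 2 <= s -> i < m -> k < m -> i != k ->
  Pc (cwS e i k).1 (cwS e i k).2 (e, i) (e, k).
Proof. move=> s2 im km ik; rewrite /Pc /sh /cwS; case: e. all: crunchb. Qed.
End Arith4.

Local Open Scope group_scope.

Lemma set2_eq (T : finType) (x y u w : T) : u != w -> [set x; y] = [set u; w] ->
  (x = u /\ y = w) \/ (x = w /\ y = u).
Proof.
move=> uw E.
have xE : x \in [set u; w] by rewrite -E set21.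
have yE : y \in [set u; w] by rewrite -E set22.
have uE : u \in [set x; y] by rewrite E set21.
have wE : w \in [set x; y] by rewrite E set22.
move: xE yE uE wE; rewrite !inE.
case/orP=> /eqP ->; case/orP => /eqP ->; rewrite ?eqxx ?orbT ?orbF /=.
- by rewrite orbb => _ /eqP wu; rewrite wu eqxx in uw.
- by left.
- by right.
- by rewrite orbb => /eqP uw'; rewrite uw' eqxx in uw.
Qed.

Section Generic.
Variable gT : finGroupType.

Definition ptree (r : gT) (p : gT -> gT) : {set {set gT}} :=
  [set [set v; p v] | v in [set v | v != r]].

Lemma adj_sym (T : {set {set gT}}) : symmetric (adj T).
Proof. by move=> x y; rewrite /adj eq_sym setUC. Qed.

Variables (r : gT) (p : gT -> gT) (d : gT -> nat).
Hypothesis dP : forall v, v != r -> (d (p v) < d v)%N.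

Lemma p_neq v : v != r -> v != p v.
Proof. by move=> /dP H; apply/eqP => E; rewrite -E ltnn in H. Qed.

Lemma in_ptree x y : [set x; y] \in ptree r p ->
  exists2 v, v != r & ((x = v /\ y = p v) \/ (x = p v /\ y = v)).
Proof.
case/imsetP => v; rewrite inE => vr E; exists v => //.
by apply: set2_eq E; apply: p_neq.
Qed.

Lemma ptree_sub : ptree r p \subset Kedges gT.
Proof.
apply/subsetP => e /imsetP [v]; rewrite inE => vr ->.
by rewrite inE cards2 p_neq.
Qed.

Lemma connect_root x : connect (adj (ptree r p)) x r.
Proof.
move: {2}(d x) (leqnn (d x)) => n; elim: n x => [|n IH] x.
  rewrite leqn0 => /eqP dx.
  case: (eqVneq x r) => [-> //|xr]; by move: (dP xr); rewrite dx.
move=> dx; case: (eqVneq x r) => [-> //|xr].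
apply: (connect_trans (y := p x)); last first.
  by apply: IH; rewrite -ltnS; apply: leq_trans (dP xr) dx.
apply: connect1; rewrite /adj p_neq //=.
by apply/imsetP; exists x; rewrite ?inE.
Qed.

Lemma ptree_connected : connected (ptree r p).
Proof.
move=> x y; apply: connect_trans (connect_root x) _.
by rewrite (sym_connect_sym (@adj_sym _)) connect_root.
Qed.

Lemma adj_ptree v u : adj (ptree r p) v u -> (d u <= d v)%N -> u = p v.
Proof.
case/andP => vu /in_ptree [w wr [[-> ->] //|[-> ->]]] duv.
by move: (dP wr); rewrite ltnNge duv.
Qed.

Lemma ptree_acyclic : acyclic (ptree r p).
Proof.
move=> c sc /andP [cc uc].
have c0 : size c != 0%N by rewrite -lt0n; apply: leq_trans sc.
have [x0 x0c] : exists x0, x0 \in c.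
  by case: c c0 {sc cc uc} => // x c' _; exists x; rewrite inE eqxx.
pose v := [arg max_(x > x0 in c) d x].
have [vc vmax] : v \in c /\ forall y, y \in c -> (d y <= d v)%N.
  by rewrite /v; case: arg_maxnP => // x xc H; split => // y yc; apply: H.
case: (rot_to vc) => i c' E.
have : ucycle (adj (ptree r p)) (v :: c') by rewrite -E rot_ucycle /ucycle cc uc.
have : size (v :: c') = size c by rewrite -E size_rot.
have cv : forall y, y \in v :: c' -> y \in c by move=> y; rewrite -E mem_rot.
case: c' E cv => [|u1 c''] E cv; first by move=> sz; rewrite -sz in sc.
case: c'' E cv => [|u2 c3] E cv; first by move=> sz; rewrite -sz in sc.
move=> _ /andP []; set e := adj _.
rewrite (cycle_path v) /= => /andP [a2 /andP [a1 _]].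
rewrite !inE !negb_or => /andP [/andP [vu1 _]] /andP [/andP [u1u2 u1c3] _].
have u1c : u1 \in c by apply: cv; rewrite !inE eqxx orbT.
have e1 := adj_ptree a1 (vmax _ u1c).
rewrite /e adj_sym in a2.
have lc : last u2 c3 \in c by apply: cv; rewrite in_cons; apply/orP; right; rewrite in_cons; apply/orP; right; exact: mem_last.
have e2 := adj_ptree a2 (vmax _ lc).
have : u1 != last u2 c3.
  apply: contraNneq u1u2 => E1; move: (mem_last u2 c3); rewrite -E1 inE (negbTE u1c3) orbF; by move/eqP ->.
by rewrite e1 e2 eqxx.
Qed.

Lemma ptree_spanning : spanning_tree (ptree r p).
Proof. by split; [apply: ptree_sub | split; [apply: ptree_connected | apply: ptree_acyclic]]. Qed.

Lemma ptree_card : #|ptree r p| = #|gT|.-1.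
Proof.
rewrite card_in_imset; first by rewrite -(cardC1 r); apply: eq_card => x; rewrite !inE.
move=> x y; rewrite !inE => xr yr E.
case: (set2_eq (p_neq yr) E) => [[] //|[xE yE]].
have := dP yr; have := dP xr; rewrite -xE yE => h1 h2; have := ltn_trans h1 h2; by rewrite ltnn.
Qed.

End Generic.


Section Fact.
Variables (gT : finGroupType) (L : finType) (V : {set L}) (pi : L -> gT -> gT).
Hypothesis pi_neq : forall l x, l \in V -> x != pi l x.
Hypothesis pi_inv : forall l x, l \in V -> pi l (pi l x) = x.
Hypothesis pi_ex : forall x y, x != y -> exists2 l, l \in V & pi l x = y.
Hypothesis pi_uniq : forall l l' x, l \in V -> l' \in V -> pi l x = pi l' x -> l = l'.

Definition Mf l : {set {set gT}} := [set [set x; pi l x] | x : gT].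
Definition Fam : {set {set {set gT}}} := [set Mf l | l in V].

Lemma in_Mf l x y : l \in V -> [set x; y] \in Mf l -> pi l x = y.
Proof.
move=> lV /imsetP [z _ E].
case: (set2_eq (pi_neq z lV) E) => [[-> ->] //|[-> ->]]; by rewrite pi_inv.
Qed.

Lemma Mf_in l x : [set x; pi l x] \in Mf l.
Proof. by apply/imsetP; exists x. Qed.

Lemma Mf_sub l : l \in V -> Mf l \subset Kedges gT.
Proof. by move=> lV; apply/subsetP => e /imsetP [x _ ->]; rewrite inE cards2 pi_neq. Qed.

Lemma Mf_one l : l \in V -> one_factor (Mf l).
Proof.
move=> lV; split; first exact: Mf_sub.
move=> x; apply/eqP/cards1P; exists [set x; pi l x]; apply/setP => e.
rewrite !inE; apply/andP/eqP => [[/imsetP [z _ ->]]|->]; last by rewrite Mf_in set21.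
rewrite !inE => /orP [] /eqP ->; first by [].
by rewrite pi_inv // setUC.
Qed.

Lemma Mf_eq l l' : l \in V -> l' \in V -> Mf l = Mf l' -> l = l'.
Proof.
move=> lV l'V E; apply: (@pi_uniq l l' 1) => //.
by apply: in_Mf => //; rewrite E Mf_in.
Qed.

Lemma Fam_fact : one_factorization Fam.
Proof.
split; last by move=> M /imsetP [l lV ->]; apply: Mf_one.
apply/and3P; split.
- rewrite eqEsubset; apply/andP; split.
    apply/subsetP => e /bigcupP [M /imsetP [l lV ->]].
    by apply/subsetP/Mf_sub.
  apply/subsetP => e; rewrite inE => /cards2P [x [y [xy ->]]].
  case: (pi_ex xy) => l lV E; apply/bigcupP; exists (Mf l); first exact: imset_f.
  by rewrite -E Mf_in.
- apply/trivIsetP => A B /imsetP [l lV ->] /imsetP [l' l'V ->] ne.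
  apply/pred0P => e /=; apply/negbTE/negP => /andP [/imsetP [x _ Ex] eB].
  move: eB; rewrite Ex => /(in_Mf l'V) E'.
  by move: ne; rewrite (pi_uniq l'V lV E') eqxx.
- apply/imsetP => [[l lV E]].
  by have := Mf_in l 1; rewrite -E inE.
Qed.

Lemma card_Fam : #|Fam| = #|V|.
Proof. by rewrite card_in_imset // => l l' lV l'V; apply: Mf_eq. Qed.

Lemma rtrans_set2 (x y g : gT) : [set x; y] :* g = [set x * g; y * g].
Proof. by rewrite -rcosetE /rcoset imsetU1 imset_set1. Qed.

Lemma Mf_rtrans l l' g : (forall x, pi l' (x * g) = pi l x * g) -> rtrans (Mf l) g = Mf l'.
Proof.
move=> H; apply/setP => e; apply/imsetP/imsetP.
  case=> f /imsetP [x _ ->] ->; exists (x * g) => //.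
  by rewrite rtrans_set2 H.
case=> x _ ->; exists ([set x * g^-1; pi l (x * g^-1)]); first exact: Mf_in.
by rewrite rtrans_set2 -H mulgKV.
Qed.

Hypothesis pi_reg : forall l g, l \in V ->
  exists2 l', l' \in V & forall x, pi l' (x * g) = pi l x * g.

Lemma Fam_reg : G_regular Fam.
Proof.
move=> M g /imsetP [l lV ->]; case: (pi_reg g lV) => l' l'V H.
apply/imsetP; exists l' => //; apply/setP => e; apply/imsetP/imsetP.
  case=> f /imsetP [x _ ->] ->; exists (x * g) => //.
  by rewrite rtrans_set2 H.
case=> x _ ->; exists ([set x * g^-1; pi l (x * g^-1)]); first exact: Mf_in.
by rewrite rtrans_set2 -H mulgKV.
Qed.

End Fact.

Section Rainbow.
Variable gT : finGroupType.

Lemma rtransM (M : {set {set gT}}) g h : rtrans (rtrans M g) h = rtrans M (g * h).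
Proof.
apply/setP => e; apply/imsetP/imsetP.
  by case=> f /imsetP [e' e'M ->] ->; exists e' => //; rewrite rcosetM.
by case=> f fM ->; exists (f :* g); [apply: imset_f | rewrite rcosetM].
Qed.

Lemma rtrans1 (M : {set {set gT}}) : rtrans M 1 = M.
Proof.
apply/setP => e; apply/imsetP/idP.
  by case=> f fM ->; rewrite rcoset1.
by move=> eM; exists e; rewrite ?rcoset1.
Qed.

Lemma rtrans_meet (F : {set {set {set gT}}}) (T : {set {set gT}}) g :
  G_regular F -> (forall M, M \in F -> T :&: M != set0) ->
  forall M, M \in F -> rtrans T g :&: M != set0.
Proof.
move=> reg H M MF; have M'F := reg M g^-1 MF.
case/set0Pn: (H _ M'F) => e; rewrite inE => /andP [eT eM].
apply/set0Pn; exists (e :* g); rewrite inE; apply/andP; split; first exact: imset_f.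
by rewrite -[M]rtrans1 -(mulVg g) -rtransM; apply: imset_f.
Qed.

Lemma card_rtrans (T : {set {set gT}}) g : #|rtrans T g| = #|T|.
Proof. by rewrite card_imset //; apply: rcoset_inj. Qed.

Lemma rainbow_count (F : {set {set {set gT}}}) (T : {set {set gT}}) :
  one_factorization F -> T \subset Kedges gT -> #|T| = #|F| ->
  (forall M, M \in F -> T :&: M != set0) ->
  forall M, M \in F -> #|T :&: M| = 1%N.
Proof.
move=> [/and3P [/eqP cov triv _] _] sub cT ne.
have sE : forall A : {set {set gT}},
    (\sum_(x in A) (if x \in T then 1 else 0) = #|T :&: A|)%N.
  move=> A; rewrite -big_mkcondr sum1dep_card; apply: eq_card => x.
  by rewrite !inE andbC.
have sumE : #|T| = (\sum_(M in F) #|T :&: M|)%N.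
  rewrite -{1}(setIidPl sub) -cov -sE (big_trivIset _ triv) /=.

  by apply: eq_bigr => M _; rewrite sE.
have ge1 : forall M, M \in F -> (1 <= #|T :&: M|)%N.
  by move=> M /ne; rewrite card_gt0.
move=> M0 M0F; apply/eqP; rewrite eqn_leq ge1 // andbT.
have : (#|T :&: M0| + (#|F| - 1) <= #|F|)%N.
  rewrite -{2}cT sumE (bigD1 M0) //= leq_add2l.
  rewrite (cardsD1 M0 F) M0F add1n subn1 /= -sum1_card.
  rewrite (eq_bigl (fun i => (i \in F) && (i != M0))); last by move=> i; rewrite !inE andbC.
  by apply: leq_sum => M /andP [MF _]; apply: ge1.
have : (1 <= #|F|)%N by rewrite card_gt0; apply/set0Pn; exists M0.
move=> h1 h2; rewrite -(leq_add2r (#|F| - 1)) addnC subnKC //.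
by rewrite addnC.
Qed.
End Rainbow.

Section TreePart.
Variables (gT : finGroupType) (K : finType) (T : K -> {set {set gT}}).
Hypothesis Tsub : forall k, T k \subset Kedges gT.
Hypothesis Tne : forall k, T k != set0.
Hypothesis Tcov : forall e, e \in Kedges gT -> exists k, e \in T k.
Hypothesis Tsum : (\sum_k #|T k| = #|Kedges gT|)%N.

Lemma tree_partition : partition [set T k | k : K] (Kedges gT).
Proof.
have cov : cover [set T k | k : K] = Kedges gT.
  apply/eqP; rewrite eqEsubset; apply/andP; split.
    by apply/subsetP => e /bigcupP [B /imsetP [k _ ->]]; apply/subsetP.
  apply/subsetP => e /Tcov [k ek]; apply/bigcupP; exists (T k) => //.
  exact: imset_f.
apply/and3P; split; first by rewrite cov.
- rewrite /trivIset eqn_leq; apply/andP; split; last first.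
    by have := leq_card_cover [set T k | k : K]; case.
  rewrite cov -Tsum (partition_big_imset T) /=.
  apply: leq_sum => B /imsetP [k _ ->].
  by rewrite (bigD1 k) //= leq_addr.
- by apply/imsetP => [[k _ E]]; move: (Tne k); rewrite -E eqxx.
Qed.
End TreePart.

Lemma rtrans_ptree (gT : finGroupType) (r : gT) p g :
  rtrans (ptree r p) g = ptree (r * g) (fun u => p (u * g^-1) * g).
Proof.
apply/setP => e; apply/imsetP/imsetP.
  case=> f /imsetP [v]; rewrite inE => vr -> ->.
  exists (v * g); first by rewrite inE (can_eq (mulgK g)).
  by rewrite rtrans_set2 mulgK.
case=> v; rewrite inE => vr ->.
exists [set v * g^-1; p (v * g^-1)].
  by apply: imset_f; rewrite inE -(can_eq (mulgK g)) mulgKV.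
by rewrite rtrans_set2 mulgKV.
Qed.


Arguments pcf : simpl never.
Arguments wit : simpl never.
Arguments ta : simpl never.
Arguments tb : simpl never.
Arguments sa : simpl never.
Arguments sb : simpl never.
Arguments pt : simpl never.
Arguments dt : simpl never.
Arguments wl : simpl never.
Arguments sh : simpl never.
Arguments cwA : simpl never.
Arguments cwS : simpl never.

Section Dic.
Variables (gT : finGroupType) (s : nat) (a b : gT).
Hypothesis s2 : (2 <= s)%N.
Hypothesis cardG : #|gT| = (4 * s)%N.
Hypothesis gen : <<[set a; b]>> = [set: gT].
Hypothesis ha : a ^+ (2 * s)%N = 1.
Hypothesis hb : b ^+ 2 = a ^+ s.
Hypothesis hab : b^-1 * a * b = a^-1.
Local Notation m := (2 * s)%N.

Definition enc (c : bool * nat) : gT := b ^+ c.1 * a ^+ c.2.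

Lemma expa_addm i j : a ^+ (addm s i j) = a ^+ i * a ^+ j.
Proof.
rewrite -expgD /addm; case: ifP => // H.
have H' : (m <= i + j)%N by rewrite leqNgt H.
by rewrite -{2}(subnK H') expgD ha mulg1.
Qed.

Lemma expa_subm i j : (j <= m)%N -> a ^+ (subm s i j) = a ^+ i * (a ^+ j)^-1.
Proof.
move=> jm; rewrite /subm; case: ifP => H.
  by rewrite -{2}(subnK H) expgD mulgK.
have -> : (j <= i + m)%N by apply: leq_trans jm (leq_addl _ _).
have H1 : (j <= i + m)%N by apply: leq_trans jm (leq_addl _ _).
by apply: (mulIg (a ^+ j)); rewrite mulgKV -expgD subnK // expgD ha mulg1.
Qed.

Lemma expa_inv i : (i <= m)%N -> (a ^+ i)^-1 = a ^+ (m - i).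
Proof.
move=> im; apply: (mulIg (a ^+ i)); rewrite mulVg -expgD subnK //.
Qed.

Lemma ab_comm i : a ^+ i * b = b * (a ^+ i)^-1.
Proof.
have H : (a ^+ i) ^ b = (a ^+ i)^-1.
  have ab : a ^ b = a^-1 by rewrite /conjg mulgA hab.
  by rewrite conjXg ab expgVn.
by rewrite -H /conjg mulKVg.
Qed.

Lemma enc_sa c : (c.2 < m)%N -> enc c * a = enc (sa s c).
Proof. by case: c => e i /= _; rewrite /enc /= -mulgA expa_addm expg1. Qed.

Lemma enc_sb c : (c.2 < m)%N -> enc c * b = enc (sb s c).
Proof.
case: c => [[] i] /= im; rewrite /enc /sb /= -mulgA ab_comm.
  rewrite expg1 mulgA -expg2 hb expa_subm; last by apply: ltnW.
  by rewrite expg0 mul1g.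
by rewrite expg0 !mul1g expg1 expa_subm ?mul1g //; apply: ltnW.
Qed.

Lemma enc_sh c k : enc c * a ^+ k = enc (sh s c k).
Proof. by case: c => e i; rewrite /enc /sh /= -mulgA expa_addm. Qed.

Definition fenc (c : bool * 'I_m) : gT := enc (c.1, val c.2).

Lemma m_gt0 : (0 < m)%N. Proof. by rewrite muln_gt0; apply: leq_trans s2. Qed.

Lemma enc_in c : (c.2 < m)%N -> enc c \in fenc @: [set: bool * 'I_m].
Proof. by case: c => e i im; apply/imsetP; exists (e, Ordinal im). Qed.

Lemma enc_surj x : exists2 c, (c.2 < m)%N & enc c = x.
Proof.
pose E := fenc @: [set: bool * 'I_m].
pose H := [set g | [forall c : bool * 'I_m, fenc c * g \in E]].
have gH : group_set H.
  apply/andP; split.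
    by rewrite inE; apply/forallP => c; rewrite mulg1; apply: imset_f.
  apply/subsetP => _ /mulsgP [g h gH hH ->]; rewrite inE; apply/forallP => c.
  move: gH; rewrite inE => /forallP /(_ c) /imsetP [c' _ E1].
  by rewrite mulgA E1; move: hH; rewrite inE => /forallP /(_ c').
have aH : a \in H.
  rewrite inE; apply/forallP => -[e i]; rewrite /fenc enc_sa //=.
  by apply: enc_in; apply: sa_lt => //=.
have bH : b \in H.
  rewrite inE; apply/forallP => -[e i]; rewrite /fenc enc_sb //=.
  by apply: enc_in; apply: sb_lt => //=.
have : x \in Group gH.
  have : <<[set a; b]>> \subset Group gH by rewrite gen_subG subUset !sub1set aH bH.
  by rewrite gen => /subsetP; apply; rewrite inE.
rewrite inE => /forallP /(_ (false, Ordinal m_gt0)).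
rewrite /fenc /enc /= !expg0 !mul1g.
by case/imsetP => -[e i] _ ->; exists (e, val i) => //; apply: ltn_ord.
Qed.

Lemma fenc_inj : injective fenc.
Proof.
have E1 : fenc @: [set: bool * 'I_m] = [set: gT].
  apply/setP => x; rewrite inE; case: (enc_surj x) => c cm <-; exact: enc_in.
have : #|fenc @: [set: bool * 'I_m]| == #|[set: bool * 'I_m]|.
  by rewrite E1 !cardsT cardG card_prod card_bool card_ord; apply/eqP; lia.
move/imset_injP => H x y; apply: H; by rewrite inE.
Qed.

Lemma enc_inj c c' : (c.2 < m)%N -> (c'.2 < m)%N -> enc c = enc c' -> c = c'.
Proof.
case: c c' => e i [e' i'] /= im im' E.
have := @fenc_inj (e, Ordinal im) (e', Ordinal im'); rewrite /fenc /= => /(_ E) [-> ->] //.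
Qed.

Definition dec (x : gT) : bool * nat :=
  if [pick c | fenc c == x] is Some c then (c.1, val c.2) else (false, 0%N).

Lemma dec_spec x : enc (dec x) = x /\ ((dec x).2 < m)%N.
Proof.
rewrite /dec; case: pickP => [c /eqP <- //|H].
  by case: c => e [i im].
case: (enc_surj x) => [[e i] im E].
by move: (H (e, Ordinal im)); rewrite /fenc /= E eqxx.
Qed.

Lemma enc_dec x : enc (dec x) = x. Proof. by case: (dec_spec x). Qed.
Lemma dec_lt x : ((dec x).2 < m)%N. Proof. by case: (dec_spec x). Qed.
Lemma dec_enc c : (c.2 < m)%N -> dec (enc c) = c.
Proof. by move=> cm; apply: enc_inj => //; [apply: dec_lt | rewrite enc_dec]. Qed.


Definition Lb := (bool * 'I_m)%type.
Definition lv (l : Lb) : bool * nat := (l.1, nat_of_ord l.2).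
Lemma lvE lb j : lv (lb, j) = (lb, nat_of_ord j). Proof. by []. Qed.
Arguments lv /.
Definition V : {set Lb} := [set l | validl s (lv l)].
Definition pi (l : Lb) (x : gT) : gT := enc (pcf s (lv l) (dec x)).
Definition mkL (c : bool * nat) (H : (c.2 < m)%N) : Lb := (c.1, Ordinal H).
Lemma lv_mkL c H : lv (@mkL c H) = c. Proof. by case: c H. Qed.

Lemma lV (l : Lb) : l \in V -> (l.1 -> val l.2 != s).
Proof. by rewrite inE /validl /= ltn_ord => /implyP. Qed.

Lemma pcf_dec_lt l x : l \in V -> ((pcf s (lv l) (dec x)).2 < m)%N.
Proof.
case: l => lb j /lV /= H; have := dec_lt x; case: (dec x) => e i /= im.
by apply: pcf_lt => //.
Qed.

Lemma dec_pi l x : l \in V -> dec (pi l x) = pcf s (lv l) (dec x).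
Proof. by move=> lV; rewrite /pi dec_enc // pcf_dec_lt. Qed.

Lemma pi_neq l x : l \in V -> x != pi l x.
Proof.
move=> lV; apply/eqP => E; have := dec_pi x lV; rewrite -E; clear E.
case: l lV => lb j /lV /= H; have := dec_lt x; case: (dec x) => e i /= im E2.
exact: (pcf_neq s2 (ltn_ord j) im H (esym E2)).
Qed.

Lemma pi_inv l x : l \in V -> pi l (pi l x) = x.
Proof.
move=> lV; rewrite {1}/pi dec_pi //.
case: l lV => lb j /lV /= H; rewrite -{2}(enc_dec x); congr enc.
have := dec_lt x; case: (dec x) => e i /= im.
by apply: pcf_inv => //; apply: ltn_ord.
Qed.

Lemma wit_lt x y : ((wit s (dec x) (dec y)).2 < m)%N.
Proof.
have := dec_lt x; have := dec_lt y; case: (dec x) => e i; case: (dec y) => f k /= km im.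
by have /andP [] := wit_valid e f s2 im km.
Qed.

Lemma pi_ex x y : x != y -> exists2 l, l \in V & pi l x = y.
Proof.
move=> xy; exists (mkL (wit_lt x y)).
  rewrite inE lv_mkL.
  have := dec_lt x; have := dec_lt y; case: (dec x) => e i; case: (dec y) => f k /= km im.
  exact: wit_valid.
rewrite /pi lv_mkL -{2}(enc_dec y); congr enc.
have ne : dec x <> dec y by move=> E; move: xy; rewrite -(enc_dec x) E enc_dec eqxx.
move: ne; have := dec_lt x; have := dec_lt y; case: (dec x) => e i; case: (dec y) => f k /= km im.
by move=> ne; apply: wit_ok.
Qed.

Lemma pi_uniq l l' x : l \in V -> l' \in V -> pi l x = pi l' x -> l = l'.
Proof.
move=> lV l'V E.
have E2 : pcf s (lv l) (dec x) = pcf s (lv l') (dec x).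
  by rewrite -dec_pi // E dec_pi.
clear E.
have : lv l = lv l'.
  move: E2; case: l lV => lb j /lV /= H; case: l' l'V => lb' j' /lV /= H'.
  have := dec_lt x; case: (dec x) => e i /= im E2.
  rewrite -(wit_uniq e s2 (ltn_ord j) im H) -(wit_uniq e s2 (ltn_ord j') im H').
  by rewrite E2.
case: l {lV E2} => lb j; case: l' {l'V} => lb' j'; rewrite /lv /= => -[-> E3].
by congr pair; apply: val_inj.
Qed.

Definition FF := Fam V pi.

Lemma FF_fact : one_factorization FF.
Proof. apply: Fam_fact; [exact: pi_neq | exact: pi_inv | exact: pi_ex | exact: pi_uniq]. Qed.

Lemma ta_lt l : l \in V -> ((ta s (lv l)).2 < m)%N.
Proof.
case: l => lb j /lV /= H; by have /andP [] := ta_valid s2 (ltn_ord j) H.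
Qed.
Lemma tb_lt l : l \in V -> ((tb s (lv l)).2 < m)%N.
Proof.
case: l => lb j /lV /= H; by have /andP [] := tb_valid s2 (ltn_ord j) H.
Qed.

Lemma FF_reg : G_regular FF.
Proof.
pose H := [set g | [forall M in FF, rtrans M g \in FF]].
have gH : group_set H.
  apply/andP; split.
    by rewrite inE; apply/forall_inP => M MF; rewrite rtrans1.
  apply/subsetP => _ /mulsgP [g h gH hH ->]; rewrite inE; apply/forall_inP => M MF.
  rewrite -rtransM.
  move: hH; rewrite inE => /forall_inP; apply.
  by move: gH; rewrite inE => /forall_inP; apply.
have aH : a \in H.
  rewrite inE; apply/forall_inP => _ /imsetP [l lin ->].
  apply/imsetP; exists (mkL (ta_lt lin)).
    rewrite inE lv_mkL; case: l lin => lb j /lV /= Hl; exact: ta_valid.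
  apply: Mf_rtrans => x; rewrite /pi lv_mkL.
  rewrite -{1}(enc_dec x) enc_sa ?dec_lt // dec_enc; last by apply: sa_lt => //; apply: dec_lt.
  have := dec_lt x; case: (dec x) => e i /= im.
  case: l lin => lb j /lV /= Hl.
  rewrite ta_ok // enc_sa //; apply: pcf_lt => //.
have bH : b \in H.
  rewrite inE; apply/forall_inP => _ /imsetP [l lin ->].
  apply/imsetP; exists (mkL (tb_lt lin)).
    rewrite inE lv_mkL; case: l lin => lb j /lV /= Hl; exact: tb_valid.
  apply: Mf_rtrans => x; rewrite /pi lv_mkL.
  rewrite -{1}(enc_dec x) enc_sb ?dec_lt // dec_enc; last by apply: sb_lt => //; apply: dec_lt.
  have := dec_lt x; case: (dec x) => e i /= im.
  case: l lin => lb j /lV /= Hl.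
  rewrite tb_ok // enc_sb //; apply: pcf_lt => //.
move=> M g MF.
have : g \in Group gH.
  have : <<[set a; b]>> \subset Group gH by rewrite gen_subG subUset !sub1set aH bH.
  by rewrite gen => /subsetP; apply; rewrite inE.
by rewrite inE => /forall_inP; apply.
Qed.


Definition r0 : gT := enc (false, 0%N).
Definition P (eps : bool) (x : gT) : gT := enc (pt s eps (dec x)).
Definition Dp (eps : bool) (x : gT) : nat := dt s eps (dec x).

Lemma dec_r0 x : x != r0 -> dec x <> (false, 0%N).
Proof. by move=> xr E; move: xr; rewrite -(enc_dec x) E eqxx. Qed.

Lemma dec_P eps x : dec (P eps x) = pt s eps (dec x).
Proof.
rewrite /P dec_enc //; have := dec_lt x; case: (dec x) => e i /= im; exact: pt_lt.
Qed.

Lemma P_dec eps x : x != r0 -> (Dp eps (P eps x) < Dp eps x)%N.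
Proof.
move=> /dec_r0; rewrite /Dp dec_P; have := dec_lt x; case: (dec x) => e i /= im H.
exact: dt_dec.
Qed.

Definition Base eps := ptree r0 (P eps).
Definition Tk (k : 'I_m) := rtrans (Base (s <= k)%N) (a ^+ k).

Lemma Tk_ptree k : Tk k = ptree (r0 * a ^+ k) (fun u => P (s <= k)%N (u * (a ^+ k)^-1) * a ^+ k).
Proof. by rewrite /Tk /Base rtrans_ptree. Qed.

Lemma Tk_dP k : forall v, v != r0 * a ^+ k ->
  (Dp (s <= k)%N (P (s <= k)%N (v * (a ^+ k)^-1) * a ^+ k * (a ^+ k)^-1) < Dp (s <= k)%N (v * (a ^+ k)^-1))%N.
Proof.
move=> v vr; rewrite mulgK; apply: P_dec.
by apply: contra vr => /eqP <-; rewrite mulgKV.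
Qed.

Lemma Tk_spanning k : spanning_tree (Tk k).
Proof.
rewrite Tk_ptree; apply: (@ptree_spanning _ _ _ (fun u => Dp (s <= k)%N (u * (a ^+ k)^-1))).
exact: Tk_dP.
Qed.

Lemma Tk_card k : #|Tk k| = (4 * s).-1.
Proof.
rewrite Tk_ptree (@ptree_card _ _ _ (fun u => Dp (s <= k)%N (u * (a ^+ k)^-1))) ?cardG //.
exact: Tk_dP.
Qed.

Lemma card_V : #|V| = (4 * s).-1.
Proof.
have sm : (s < m)%N by lia.
have -> : V = [set~ (true, Ordinal sm)].
  apply/setP => -[lb j]; rewrite !inE /validl /= ltn_ord /=.
  rewrite xpair_eqE -val_eqE /=; by case: lb.
by rewrite cardsC1 card_prod card_bool card_ord; congr predn; lia.
Qed.

Lemma FF_card : #|FF| = (4 * s).-1.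
Proof. by rewrite /FF card_Fam ?card_V //; [exact: pi_neq | exact: pi_inv | exact: pi_uniq]. Qed.

Lemma Base_meet eps M : M \in FF -> Base eps :&: M != set0.
Proof.
case/imsetP => l lin ->; apply/set0Pn.
have Hw : ((wl s eps (lv l)).2 < m)%N by case: l lin => lb j _; apply: wl_lt.
exists [set enc (wl s eps (lv l)); P eps (enc (wl s eps (lv l)))].
rewrite inE; apply/andP; split.
  apply/imsetP; exists (enc (wl s eps (lv l))) => //; rewrite inE.
  apply/eqP => /enc_inj E; case: l lin Hw E => lb j _ /= Hw E.
  exact: (wl_root s2 (ltn_ord j) (E Hw m_gt0)).
have -> : P eps (enc (wl s eps (lv l))) = pi l (enc (wl s eps (lv l))).
  rewrite /P /pi !dec_enc //; congr enc.
  by case: l lin Hw => lb j /lV /= H Hw; rewrite wl_ok.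
exact: Mf_in.
Qed.

Lemma Tk_rainbow k : rainbow_spanning_tree FF (Tk k).
Proof.
split; first exact: Tk_spanning.
apply: rainbow_count; first exact: FF_fact.
- by case: (Tk_spanning k).
- by rewrite Tk_card FF_card.
- move=> M MF; rewrite /Tk; apply: (rtrans_meet _ FF_reg) => // M' M'F; exact: Base_meet.
Qed.


Lemma in_Tk kk w x y (Hk : (kk < m)%N) : (w.2 < m)%N -> w != (false, 0%N) ->
  sh s w kk = dec x -> sh s (pt s (s <= kk)%N w) kk = dec y -> [set x; y] \in Tk (Ordinal Hk).
Proof.
move=> wm w0 E1 E2; rewrite /Tk /=.
apply/imsetP; exists [set enc w; P (s <= kk)%N (enc w)].
  apply/imsetP; exists (enc w) => //; rewrite inE; apply/eqP => /enc_inj E.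
  by move: w0; rewrite E // ?eqxx //; apply: m_gt0.
rewrite rtrans_set2 /P dec_enc // !enc_sh E1 E2 !enc_dec //.
Qed.

Lemma Pc_Tk kk w x y : Pc s kk w (dec x) (dec y) -> exists k, [set x; y] \in Tk k.
Proof.
rewrite /Pc; case/and4P => Hk wm w0 /orP [/andP [/eqP E1 /eqP E2] | /andP [/eqP E1 /eqP E2]].
  by exists (Ordinal Hk); apply: (in_Tk Hk wm w0 E1 E2).
by exists (Ordinal Hk); rewrite setUC; apply: (in_Tk Hk wm w0 E1 E2).
Qed.

Lemma Tcov e : e \in Kedges gT -> exists k, e \in Tk k.
Proof.
rewrite inE => /cards2P [x [y [xy ->]]].
have ne : dec x <> dec y by move=> E; move: xy; rewrite -(enc_dec x) E enc_dec eqxx.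
have := dec_lt x; have := dec_lt y.
case Ex: (dec x) ne => [e1 i]; case Ey: (dec y) => [f k] /= ne km im.
case: e1 Ex ne; case: f Ey => Ey Ex ne.
- apply: (@Pc_Tk _ (cwS s true i k).2); rewrite Ex Ey; apply: cover_S => //.
  by apply/eqP => E; apply: ne; rewrite E.
- rewrite setUC; apply: (@Pc_Tk _ (cwA s k i).2); rewrite Ex Ey; exact: cover_AB.
- apply: (@Pc_Tk _ (cwA s i k).2); rewrite Ex Ey; exact: cover_AB.
- apply: (@Pc_Tk _ (cwS s false i k).2); rewrite Ex Ey; apply: cover_S => //.
  by apply/eqP => E; apply: ne; rewrite E.
Qed.

Lemma Tsum : (\sum_(k : 'I_m) #|Tk k| = #|Kedges gT|)%N.
Proof.
rewrite (eq_bigr (fun _ => (4 * s).-1)) => [|k _]; last exact: Tk_card.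
rewrite sum_nat_const card_ord /Kedges card_draws cardG bin2.
have -> : (4 * s = (2 * s).*2)%N by rewrite -mul2n mulnA.
by rewrite -doubleMl half_double.
Qed.

Lemma main_dic : exists F : {set {set {set gT}}},
    one_factorization F /\ G_regular F /\
    exists S : {set {set {set gT}}}, complete_rainbow_set F S.
Proof.
exists FF; split; first exact: FF_fact.
split; first exact: FF_reg.
exists [set Tk k | k : 'I_m]; split.
  apply: tree_partition.
  - by move=> k; case: (Tk_spanning k).
  - by move=> k; rewrite -card_gt0 Tk_card; lia.
  - exact: Tcov.
  - exact: Tsum.
by move=> T /imsetP [k _ ->]; apply: Tk_rainbow.
Qed.

End Dic.

Theorem proposition2p1 (gT : finGroupType) (s : nat) :
  (2 <= s)%N -> dicyclic gT s ->
  exists F : {set {set {set gT}}},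
    one_factorization F /\ G_regular F /\
    exists S : {set {set {set gT}}}, complete_rainbow_set F S.
Proof.
move=> s2 [cardG [a [b [gen [ha [hb hab]]]]]].
exact: (main_dic s2 cardG gen ha hb hab).
Qed.
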